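(* Let $N=k_1 b_1=k_2 b_2$ with positive integers $k_1,b_1,k_2,b_2$. Let $\mathcal{B}_1\cong\mathrm{O}(b_1)^{k_1}$ be the group of $N\times N$ block-diagonal matrices with $k_1$ orthogonal diagonal blocks of size $b_1\times b_1$, and $\mathcal{B}_2\cong \mathrm{O}(b_2)^{k_2}$ the group of $N\times N$ block-diagonal matrices with $k_2$ orthogonal diagonal blocks of size $b_2\times b_2$; let $G=\mathcal{B}_2\times\mathcal{B}_1$. Let $P_1$ be the $N\times N$ perfect shuffle permutation matrix defined by $P_1(e_a\otimes e_c)=e_c\otimes e_a$ for all standard basis vectors $e_a\in\mathbb{R}^{k_1}$, $e_c\in\mathbb{R}^{b_1}$ (so that $P_1(X\otimes Y)P_1^\top=Y\otimes X$ for all $X\in\mathbb{R}^{k_1\times k_1}$, $Y\in\mathbb{R}^{b_1\times b_1}$). Consider the stabilizer $$\operatorname{Stab}_G(P_1)=\{(B_2,B_1)\in G : B_2 P_1 B_1^\top = P_1\}.$$ If $k_1\ge b_2$, then every $(B_2,B_1)\in\operatorname{Stab}_G(P_1)$ has $B_2$ diagonal with diagonal entries in $\{\pm1\}$ (and $B_1=P_1^\top B_2 P_1$); in particular $\operatorname{Stab}_G(P_1)$ is a finite, hence discrete, subgroup of $G$. The same conclusion holds when all orthogonal blocks are required to lie in the special orthogonal groups $\mathrm{SO}(b_1)$, $\mathrm{SO}(b_2)$.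
   Context: The block-diagonal matrices in $\mathcal{B}_1$ have the form $\sum_{a=1}^{k_1} E_{aa}\otimes M_a$ with $E_{aa}$ the $k_1\times k_1$ matrix unit and $M_a\in\mathrm{O}(b_1)$. $\mathrm{SO}(m)$ denotes orthogonal $m\times m$ matrices of determinant $1$. *)

(* Defs.v *)
From HB Require Import structures.
From mathcomp Require Import all_boot all_order all_algebra.
From mathcomp Require Import reals.
From mathcomp Require Import zify.
Set Implicit Arguments. Unset Strict Implicit. Unset Printing Implicit Defensive.
Import Order.TTheory GRing.Theory Num.Theory.
Local Open Scope ring_scope.

(* Kronecker index: e_a (x) e_c in R^k (x) R^b is the standard basis vector
   with index a * b + c in R^(k*b). *)
Lemma kidx_proof (k b : nat) (a : 'I_k) (c : 'I_b) : (a * b + c < k * b)%N.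
Proof.
case: a c => a Ha [c Hc] /=.
have : (a.+1 * b <= k * b)%N by rewrite leq_mul2r Ha orbT.
rewrite mulSn => H; lia.
Qed.

Definition kidx (k b : nat) (a : 'I_k) (c : 'I_b) : 'I_(k * b) :=
  Ordinal (kidx_proof a c).

(* A matrix B : 'M_N (with e : k * b = N) lies in the block-diagonal group
   O(b)^k (or SO(b)^k when SO = true): B = sum_a E_aa (x) M_a, M_a orthogonal. *)
Definition block_orth (R : realType) (k b N : nat) (e : (k * b)%N = N)
    (SO : bool) (B : 'M[R]_N) : Prop :=
  exists M : 'I_k -> 'M[R]_b,
    (forall a, M a *m (M a)^T = 1%:M /\ (SO -> \det (M a) = 1)) /\
    (forall (a a' : 'I_k) (c c' : 'I_b),
        B (cast_ord e (kidx a c)) (cast_ord e (kidx a' c')) =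
        if a == a' then M a c c' else 0).

(* Perfect shuffle P : 'M_(k*b), P (e_a (x) e_c) = e_c (x) e_a. *)
Definition shuffle (R : realType) (k b : nat) : 'M[R]_(k * b) :=
  \matrix_(i, j)
    ([exists a : 'I_k, exists c : 'I_b,
        (i == cast_ord (mulnC b k) (kidx c a)) && (j == kidx a c)])%:R.

Definition in_stab (R : realType) (k1 b1 k2 b2 : nat)
    (eN : (k2 * b2)%N = (k1 * b1)%N) (SO : bool)
    (B2 B1 : 'M[R]_(k1 * b1)) : Prop :=
  [/\ @block_orth R k2 b2 _ eN SO B2, @block_orth R k1 b1 _ (erefl (k1 * b1)%N) SO B1 &
      B2 *m shuffle R k1 b1 *m B1^T = shuffle R k1 b1].

(* Main.v *)
Require Import Defs.
From HB Require Import structures.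
From mathcomp Require Import all_boot all_order all_algebra all_fingroup.
From mathcomp Require Import reals.
From mathcomp Require Import zify.
From mathcomp Require Import ring.
Set Implicit Arguments. Unset Strict Implicit. Unset Printing Implicit Defensive.
Import Order.TTheory GRing.Theory Num.Theory.
Local Open Scope ring_scope.

Lemma kidx_surj (k b : nat) (u : 'I_(k * b)) : (0 < b)%N ->
  exists a : 'I_k, exists c : 'I_b, u = kidx a c /\ (val a = u %/ b)%N /\ (val c = u %% b)%N.
Proof.
move=> hb.
have ha : (u %/ b < k)%N by rewrite ltn_divLR // ltn_ord.
have hc : (u %% b < b)%N by rewrite ltn_mod.
exists (Ordinal ha), (Ordinal hc); split=> //; apply: val_inj => /=.
by rewrite -divn_eq.
Qed.

Lemma kidx_inj (k b : nat) (a a' : 'I_k) (c c' : 'I_b) :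
  kidx a c = kidx a' c' -> a = a' /\ c = c'.
Proof.
move/(congr1 val) => /= H.
have H1 : ((a * b + c) %/ b = (a' * b + c') %/ b)%N by rewrite H.
have H2 : ((a * b + c) %% b = (a' * b + c') %% b)%N by rewrite H.
have hb : (0 < b)%N := leq_ltn_trans (leq0n c) (ltn_ord c).
rewrite !divnMDl // !divn_small // !addn0 in H1.
rewrite !modnMDl !modn_small // in H2.
by split; apply: val_inj.
Qed.

Lemma block_orth_orth (R : realType) (k b N : nat) (e : (k * b)%N = N) SO (B : 'M[R]_N) :
  (0 < b)%N -> block_orth e SO B -> B *m B^T = 1%:M.
Proof.
move=> hb [M [hM hB]]; case: N / e B hB => B hB.
rewrite /= in hB.
have hB' : forall a a' c c', B (kidx a c) (kidx a' c') = if a == a' then M a c c' else 0.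
  by move=> a a' c c'; rewrite -hB !cast_ord_id.
apply/matrixP => i j.
have [a [c [-> _]]] := kidx_surj i hb.
have [a' [c' [-> _]]] := kidx_surj j hb.
rewrite !mxE.
have dl : forall l : 'I_(k * b), (l %/ b < k)%N by move=> l; rewrite ltn_divLR // ltn_ord.
have ml : forall l : 'I_(k * b), (l %% b < b)%N by move=> l; rewrite ltn_mod.
have bij : {on [pred l | true], bijective (fun p : 'I_k * 'I_b => kidx p.1 p.2)}.
  apply: onW_bij.
  exists (fun l => (Ordinal (dl l), Ordinal (ml l))).
    case=> x y /=; congr pair; apply: val_inj => /=.
      by rewrite divnMDl // divn_small // addn0.
    by rewrite modnMDl modn_small.
  by move=> l; apply: val_inj => /=; rewrite -divn_eq.
rewrite (reindex _ bij) /=.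
under eq_bigr do rewrite mxE.
rewrite -(pair_bigA _ (fun x y => B (kidx a c) (kidx x y) * B (kidx a' c') (kidx x y))) /=.
rewrite (bigD1 a) //= [X in _ + X]big1 ?addr0; last first.
  move=> x hx; have {}hx : (a == x) = false by rewrite eq_sym; apply/negbTE.
  by apply: big1 => y _; rewrite hB' hx mul0r.
under eq_bigr => y _ do rewrite !hB'.
have aa : (a == a) = true := eqxx a. rewrite aa.
have [<-|ne] := eqVneq a a'.
  have := congr1 (fun A : 'M[R]_b => A c c') (proj1 (hM a)); rewrite !mxE => E.
  rewrite (eq_bigr (fun y => M a c y * (M a)^T y c')); last by move=> y _; rewrite mxE.
  rewrite E; congr ((nat_of_bool _)%:R).
  apply/idP/idP => /eqP H; apply/eqP; first by rewrite H.
  by case: (kidx_inj H).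
rewrite big1; last by move=> y _; rewrite mulr0.
case: eqP => // /kidx_inj [] aa' _.
by move: ne; rewrite aa' eqxx.
Qed.

Section Sh.
Variables (k b : nat) (hk : (0 < k)%N).

Lemma sh_mod (i : 'I_(k * b)) : (i %% k < k)%N.
Proof. by rewrite ltn_mod. Qed.
Lemma sh_div (i : 'I_(k * b)) : (i %/ k < b)%N.
Proof. rewrite ltn_divLR //; have := ltn_ord i; lia. Qed.

Definition sh_fun (i : 'I_(k * b)) : 'I_(k * b) :=
  kidx (Ordinal (sh_mod i)) (Ordinal (sh_div i)).

Lemma sh_inj : injective sh_fun.
Proof.
move=> i j /kidx_inj [] /(congr1 val) /= h1 /(congr1 val) /= h2.
by apply: val_inj; rewrite /= (divn_eq i k) (divn_eq j k) h1 h2.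
Qed.

Definition sh_perm : {perm 'I_(k * b)} := perm sh_inj.

Lemma shuffle_perm (R : realType) : shuffle R k b = perm_mx sh_perm.
Proof.
apply/matrixP => i j; rewrite /perm_mx !mxE permE; congr ((nat_of_bool _)%:R).
apply/idP/idP.
  case/existsP => a /existsP [c /andP [/eqP hi /eqP ->]].
  have hv : (val i = c * k + a)%N by rewrite hi.
  have e1 : (i %% k = a)%N by rewrite hv modnMDl modn_small.
  have e2 : (i %/ k = c)%N by rewrite hv divnMDl // divn_small // addn0.
  by apply/eqP/val_inj; rewrite /= e1 e2.
move/eqP => <-; apply/existsP; exists (Ordinal (sh_mod i)); apply/existsP.
exists (Ordinal (sh_div i)); rewrite eqxx andbT; apply/eqP/val_inj => /=.
exact: divn_eq.
Qed.
End Sh.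

Lemma arith (u v b k : nat) : (0 < b)%N -> (b <= k)%N -> (u %/ b = v %/ b)%N ->
  (u %% k = v %% k)%N -> u = v.
Proof.
move=> hb hbk.
wlog huv : u v / (u <= v)%N.
  move=> H h1 h2; case: (leqP u v) => h; first exact: H.
  by symmetry; apply: H => //; exact: ltnW.
move=> hd hm.
have lt : (v - u < b)%N.
  have := divn_eq u b; have := divn_eq v b; have := ltn_pmod u hb; have := ltn_pmod v hb.
  rewrite hd; lia.
have : (k %| v - u)%N by rewrite -eqn_mod_dvd // hm.
case: (posnP (v - u)) => [h0 _|hp /(dvdn_leq hp) hk]; first lia.
lia.
Qed.

Lemma sq1 (R : realType) (x : R) : x * x = 1 -> x = 1 \/ x = -1.
Proof.
move=> E; have H : (x - 1) * (x + 1) = x * x - 1 by ring.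
have : (x - 1) * (x + 1) = 0 by rewrite H E subrr.
move/eqP; rewrite mulf_eq0 subr_eq0 addr_eq0 => /orP [/eqP ->|/eqP ->]; by [left|right].
Qed.

Theorem mainTheorem3 (R : realType) (k1 b1 k2 b2 : nat)
    (hk1 : (0 < k1)%N) (hb1 : (0 < b1)%N) (hk2 : (0 < k2)%N) (hb2 : (0 < b2)%N)
    (eN : (k2 * b2)%N = (k1 * b1)%N) (hkb : (b2 <= k1)%N) (SO : bool) :
  (forall B2 B1 : 'M[R]_(k1 * b1), in_stab eN SO B2 B1 ->
      [/\ is_diag_mx B2,
          (forall i, B2 i i = 1 \/ B2 i i = -1) &
          B1 = (shuffle R k1 b1)^T *m B2 *m shuffle R k1 b1]) /\
  (exists s : seq ('M[R]_(k1 * b1) * 'M[R]_(k1 * b1)),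
      forall B2 B1 : 'M[R]_(k1 * b1), in_stab eN SO B2 B1 -> (B2, B1) \in s).
Proof.
set P := shuffle R k1 b1.
have hP : P = perm_mx (sh_perm b1 hk1) by rewrite /P shuffle_perm.
have PtP : P^T *m P = 1%:M by rewrite hP tr_perm_mx -perm_mxM mulVg perm_mx1.
have PPt : P *m P^T = 1%:M by rewrite hP tr_perm_mx -perm_mxM mulgV perm_mx1.
have main : forall B2 B1 : 'M[R]_(k1 * b1), in_stab eN SO B2 B1 ->
      [/\ is_diag_mx B2,
          (forall i, B2 i i = 1 \/ B2 i i = -1) &
          B1 = P^T *m B2 *m P].
  move=> B2 B1 [h2 h1 hs].
  have o1 : B1^T *m B1 = 1%:M by apply: mulmx1C; exact: (block_orth_orth hb1 h1).
  have o2 : B2 *m B2^T = 1%:M by exact: (block_orth_orth hb2 h2).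
  have e1 : B2 *m P = P *m B1.
    by rewrite -/P in hs; rewrite -[in RHS]hs -!mulmxA o1 mulmx1.
  have eB1 : B1 = P^T *m B2 *m P by rewrite -mulmxA e1 mulmxA PtP mul1mx.
  have eB2 : B2 = P *m B1 *m P^T by rewrite -e1 -mulmxA PPt mulmx1.
  have eB2' : forall u v, B2 u v = B1 (sh_perm b1 hk1 u) (sh_perm b1 hk1 v).
    move=> u v; rewrite eB2 hP tr_perm_mx -row_permE -col_permE.
    by rewrite !mxE.
  have [M1 [_ hB1]] := h1.
  have [M2 [_ hB2]] := h2.
  have diag : forall u v : 'I_(k1 * b1), u != v -> B2 u v = 0.
    move=> u v huv.
    have [a [c [hu [ha _]]]] := kidx_surj (cast_ord (esym eN) u) hb2.
    have [a' [c' [hv [ha' _]]]] := kidx_surj (cast_ord (esym eN) v) hb2.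
    have Eu : u = cast_ord eN (kidx a c) by rewrite -hu cast_ordKV.
    have Ev : v = cast_ord eN (kidx a' c') by rewrite -hv cast_ordKV.
    have [aa|na] := eqVneq a a'; last by rewrite Eu Ev hB2 (negbTE na).
    rewrite eB2' !permE /sh_fun.
    rewrite -[kidx _ _]cast_ord_id -[X in B1 _ X]cast_ord_id hB1.
    case: eqP => // /(congr1 val) /= hm.
    have hd : (u %/ b2 = v %/ b2)%N by move: ha ha'; rewrite aa /= => <- <-.
    by move/eqP: huv; case; apply: val_inj; apply: (arith hb2 hkb hd hm).
  have isd : is_diag_mx B2.
    apply/forallP => u; apply/forallP => v; apply/implyP => huv; apply/eqP.
    by apply: diag; apply: contra huv => /eqP ->.
  split => // i.
  apply: sq1.
  have := congr1 (fun A : 'M[R]_(k1 * b1) => A i i) o2; rewrite !mxE eqxx /= mulr1n => <-.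
  rewrite (bigD1 i) //= big1 ?addr0; first by rewrite mxE.
  by move=> j hj; rewrite diag ?mul0r // eq_sym.
split; first exact: main.
pose dg (f : {ffun 'I_(k1 * b1) -> bool}) : 'M[R]_(k1 * b1) :=
  diag_mx (\row_i (if f i then 1 else -1)).
exists [seq (dg f, P^T *m dg f *m P) | f <- enum {: {ffun 'I_(k1 * b1) -> bool}}].
move=> B2 B1 hs; have [isd pm ->] := main B2 B1 hs.
have -> : B2 = dg [ffun i => B2 i i == 1].
  apply/matrixP => u v; rewrite /dg !mxE ffunE.
  case: (eqVneq u v) => [<-|ne].
    by rewrite mulr1n; case: (pm u) => ->; rewrite ?eqxx // lt_eqF // (lt_trans (ltrN10 _) ltr01).
  rewrite mulr0n; have := isd => /forallP /(_ u) /forallP /(_ v).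
  by move=> /implyP H; apply/eqP; apply: H; exact: ne.
by apply: map_f; rewrite mem_enum.
Qed.
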